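(* Let $\sigma\in(0,0.25]$, $\pi_0\in(0,1)$, $w>0$, and let $\psi(\pi)=w$ if $\pi\ge\pi_0$ and $\psi(\pi)=0$ otherwise (i.e. the threshold equals the prior). Define $\pi_1(1)=\frac{(1+4\sigma)\pi_0}{1+4\sigma\pi_0}$, $\pi_1(0)=\frac{(1-4\sigma)\pi_0}{1-4\sigma\pi_0}$, $\Phi(C,\sigma,\pi_0)=0.5+2\sigma\pi_0+(0.5+2\sigma\pi_0)\psi(\pi_1(1))+(0.5-2\sigma\pi_0)\psi(\pi_1(0))$ and $\Phi(S,\sigma,\pi_0)=0.5+\psi(\pi_0)$; the expert chooses the complex rule iff $\Phi(C,\sigma,\pi_0)\ge\Phi(S,\sigma,\pi_0)$. Then the expert chooses the complex rule if and only if $$w\le\frac{4\sigma\pi_0}{1-4\sigma\pi_0}.$$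
   Context: Interpretation: the expert earns wage $w$ iff the posterior belief that he is competent is at least the prior $\pi_0$; the complex rule yields the correct action with probability $0.5+2\sigma$ if he is competent and $0.5$ otherwise, and the simple rule yields it with probability $0.5$ and reveals nothing. *)

(* Defs.v *)
From Stdlib Require Import Reals.
Open Scope R_scope.

Definition psi (pi0 w p : R) : R := if Rle_dec pi0 p then w else 0.

(* Posterior after a correct (1) / incorrect (0) outcome under the complex rule. *)
Definition pi1_1 (sigma pi0 : R) : R := ((1 + 4 * sigma) * pi0) / (1 + 4 * sigma * pi0).
Definition pi1_0 (sigma pi0 : R) : R := ((1 - 4 * sigma) * pi0) / (1 - 4 * sigma * pi0).

Definition PhiC (sigma pi0 w : R) : R :=
  1/2 + 2 * sigma * pi0
  + (1/2 + 2 * sigma * pi0) * psi pi0 w (pi1_1 sigma pi0)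
  + (1/2 - 2 * sigma * pi0) * psi pi0 w (pi1_0 sigma pi0).

Definition PhiS (pi0 w : R) : R := 1/2 + psi pi0 w pi0.

Definition chooses_complex (sigma pi0 w : R) : Prop := PhiC sigma pi0 w >= PhiS pi0 w.

(* Main.v *)
Require Import Defs.
From Stdlib Require Import Reals Lra.
Open Scope R_scope.

Theorem corollary3 (sigma pi0 w : R) :
  0 < sigma <= 1/4 -> 0 < pi0 < 1 -> 0 < w ->
  (chooses_complex sigma pi0 w <-> w <= (4 * sigma * pi0) / (1 - 4 * sigma * pi0)).
Proof.
  intros [Hs1 Hs2] [Hp1 Hp2] Hw.
  assert (Ha : 0 < sigma * pi0) by (apply Rmult_lt_0_compat; lra).
  assert (Hb : sigma * pi0 < sigma) by nra.
  assert (Hd1 : 0 < 1 + 4 * sigma * pi0) by lra.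
  assert (Hd0 : 0 < 1 - 4 * sigma * pi0) by lra.
  assert (E1 : psi pi0 w (pi1_1 sigma pi0) = w).
  { unfold psi, pi1_1. destruct (Rle_dec _ _) as [|n]; [reflexivity|].
    exfalso; apply n. apply Rmult_le_reg_r with (1 + 4 * sigma * pi0); [lra|].
    replace ((1 + 4 * sigma) * pi0 / (1 + 4 * sigma * pi0) * (1 + 4 * sigma * pi0)) with ((1 + 4 * sigma) * pi0) by (field; lra). nra. }
  assert (E0 : psi pi0 w (pi1_0 sigma pi0) = 0).
  { unfold psi, pi1_0. destruct (Rle_dec _ _) as [r|]; [|reflexivity].
    exfalso. apply Rmult_le_compat_r with (r := 1 - 4 * sigma * pi0) in r; [|lra].
    replace ((1 - 4 * sigma) * pi0 / (1 - 4 * sigma * pi0) * (1 - 4 * sigma * pi0)) with ((1 - 4 * sigma) * pi0) in r by (field; lra). nra. }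
  assert (ES : psi pi0 w pi0 = w).
  { unfold psi. destruct (Rle_dec _ _); [reflexivity| lra]. }
  unfold chooses_complex, PhiC, PhiS. rewrite E1, E0, ES.
  split; intro H.
  - apply Rmult_le_reg_r with (1 - 4 * sigma * pi0); [lra|].
    replace (4 * sigma * pi0 / (1 - 4 * sigma * pi0) * (1 - 4 * sigma * pi0)) with (4 * sigma * pi0) by (field; lra). nra.
  - apply Rmult_le_compat_r with (r := 1 - 4 * sigma * pi0) in H; [|lra].
    replace (4 * sigma * pi0 / (1 - 4 * sigma * pi0) * (1 - 4 * sigma * pi0)) with (4 * sigma * pi0) in H by (field; lra). nra.
Qed.
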